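(* Let $T$ be a near-truss and $P$ a non-empty normal sub-heap of $T$. Then $P$ is a paragon if and only if $P$ is left-closed and all equivalence classes of the sub-heap relation $\sim_P$ are right-closed. In particular, if $T$ is a skew truss, then $P$ is a paragon if and only if $P$ is a closed normal sub-heap.
   Context: A heap is a set with a ternary operation $[-,-,-]$ satisfying $[a_1,a_2,[a_3,a_4,a_5]]=[[a_1,a_2,a_3],a_4,a_5]$ and $[a,a,b]=b=[b,a,a]$. A normal sub-heap is a non-empty subset $S$ closed under $[-,-,-]$ with $[[a,e,s],a,e]\in S$ for all $a$ and $e,s\in S$; $a\sim_S b$ iff $[a,b,s]\in S$ for some (equivalently all) $s\in S$. A pre-truss is a heap with an associative multiplication; a near-truss satisfies $a[b,c,d]=[ab,ac,ad]$; a skew truss is a near-truss also satisfying $[b,c,d]a=[ba,ca,da]$. A sub-heap $S$ is left-closed if $[ts',ts,s]\in S$ for all $s,s'\in S$, $t\in T$, right-closed if $[s't,st,s]\in S$, closed if both. A paragon is a non-empty normal sub-heap $P$ such that every equivalence class of $\sim_P$ is a closed sub-heap. *)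

(* Defs.v *)
Set Implicit Arguments.
Section Heaps.
Variable T : Type.
Variable br : T -> T -> T -> T.
Variable mul : T -> T -> T.

Definition is_heap : Prop :=
  (forall a1 a2 a3 a4 a5,
      br a1 a2 (br a3 a4 a5) = br (br a1 a2 a3) a4 a5) /\
  (forall a b, br a a b = b) /\
  (forall a b, br b a a = b).

Definition is_pre_truss : Prop :=
  is_heap /\ (forall a b c, mul a (mul b c) = mul (mul a b) c).

Definition is_near_truss : Prop :=
  is_pre_truss /\
  (forall a b c d, mul a (br b c d) = br (mul a b) (mul a c) (mul a d)).

Definition is_skew_truss : Prop :=
  is_near_truss /\
  (forall a b c d, mul (br b c d) a = br (mul b a) (mul c a) (mul d a)).

Definition sub_heap (S : T -> Prop) : Prop :=
  (exists s, S s) /\ (forall a b c, S a -> S b -> S c -> S (br a b c)).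

Definition normal_sub_heap (S : T -> Prop) : Prop :=
  sub_heap S /\ (forall a e s, S e -> S s -> S (br (br a e s) a e)).

Definition sim (S : T -> Prop) (a b : T) : Prop :=
  exists s, S s /\ S (br a b s).

Definition sim_class (S : T -> Prop) (a : T) : T -> Prop := fun b => sim S a b.

Definition left_closed (S : T -> Prop) : Prop :=
  forall s s' t, S s -> S s' -> S (br (mul t s') (mul t s) s).

Definition right_closed (S : T -> Prop) : Prop :=
  forall s s' t, S s -> S s' -> S (br (mul s' t) (mul s t) s).

Definition closed (S : T -> Prop) : Prop := left_closed S /\ right_closed S.

Definition paragon (P : T -> Prop) : Prop :=
  normal_sub_heap P /\
  (forall a, sub_heap (sim_class P a) /\ closed (sim_class P a)).

End Heaps.

(* Main.v *)
Require Import Defs.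
From Stdlib Require Import Setoid.
Set Implicit Arguments.

Section H.
Variable T : Type.
Variable br : T -> T -> T -> T.
Variable P : T -> Prop.
Hypothesis hA : forall a1 a2 a3 a4 a5, br a1 a2 (br a3 a4 a5) = br (br a1 a2 a3) a4 a5.
Hypothesis hM1 : forall a b, br a a b = b.
Hypothesis hM2 : forall a b, br b a a = b.
Hypothesis hP : normal_sub_heap br P.

Lemma mid x a b c y : br x (br a b c) y = br (br x c b) a y.
Proof.
  assert (E : br (br x c b) a (br a b c) = x).
  { rewrite hA, hM2, <- hA, hM1, hM2. reflexivity. }
  rewrite <- (hM1 (br a b c) y) at 2. rewrite hA, E. reflexivity.
Qed.

Lemma Pbr a b c : P a -> P b -> P c -> P (br a b c).
Proof. destruct hP as [[_ H] _]. apply H. Qed.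

Lemma sim_all a b : sim br P a b -> forall s, P s -> P (br a b s).
Proof.
  intros [s0 [Hs0 H]] s Hs.
  replace (br a b s) with (br (br a b s0) s0 s) by (rewrite <- hA, hM1; reflexivity).
  apply Pbr; auto.
Qed.

Lemma sim_refl a : sim br P a a.
Proof. destruct hP as [[[s Hs] _] _]. exists s; split; auto. rewrite hM1; auto. Qed.

Lemma sim_sym a b : sim br P a b -> sim br P b a.
Proof.
  intros [s [Hs H]]. exists s; split; auto.
  replace (br b a s) with (br s (br a b s) s) by (rewrite mid, hM1; reflexivity).
  apply Pbr; auto.
Qed.

Lemma sim_trans a b c : sim br P a b -> sim br P b c -> sim br P a c.
Proof.
  intros [s [Hs H]] H2. exists s; split; auto.
  pose proof (sim_all H2 Hs) as H3.
  replace (br a c s) with (br (br a b s) s (br b c s)).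
  - apply Pbr; auto.
  - rewrite <- hA, hM1, hA, hM2. reflexivity.
Qed.

Lemma sim_left z y s : sim br P z y -> P s -> P (br s z y).
Proof.
  intros H Hs.
  destruct hP as [_ hN].
  pose proof (sim_all (sim_sym H) Hs) as Hq.
  pose proof (hN (br s z s) s (br y z s) Hs Hq) as K.
  replace (br s z y) with (br (br (br s z s) s (br y z s)) (br s z s) s); auto.
  rewrite (hA (br s z s) s y z s), <- (hA s z s s y), hM1.
  rewrite <- hA, mid, hM1, hM2, hM2. reflexivity.
Qed.

Lemma class_subheap a : sub_heap br (sim_class br P a).
Proof.
  split.
  - exists a. apply sim_refl.
  - unfold sim_class. intros x y z Hx Hy Hz.
    apply (sim_trans Hx).
    assert (Hzy : sim br P z y) by (apply (sim_trans (sim_sym Hz)); auto).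
    destruct hP as [[[s Hs] _] hN].
    exists s; split; auto.
    rewrite mid.
    replace (br x z y) with (br x s (br s z y)) by (rewrite hA, hM2; reflexivity).
    apply hN; auto. apply sim_left; auto.
Qed.

Lemma cls_gen a (h : T -> T) :
  (forall s s', sim br P s' s -> sim br P (h s') (h s)) ->
  forall s s', sim br P a s -> sim br P a s' -> sim br P a (br (h s') (h s) s).
Proof.
  intros Hh s s' Hs Hs'.
  apply (sim_trans Hs). apply sim_sym.
  assert (Hss : sim br P s' s) by (apply (sim_trans (sim_sym Hs')); auto).
  destruct (Hh _ _ Hss) as [p [Hp Hp2]].
  exists p; split; auto. rewrite <- hA, hM1. auto.
Qed.

Lemma P_class p : P p -> forall b, P b <-> sim br P p b.
Proof.
  intros Hp b; split.
  - intros Hb. exists p; split; auto. apply Pbr; auto.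
  - intros [s [Hs H]].
    replace b with (br s (br p b s) p) by (rewrite mid, hM1, hM2; reflexivity).
    apply Pbr; auto.
Qed.

End H.

Theorem corollary3p12 :
  (forall (T : Type) (br : T -> T -> T -> T) (mul : T -> T -> T) (P : T -> Prop),
      is_near_truss br mul -> normal_sub_heap br P ->
      (paragon br mul P <->
       (left_closed br mul P /\ forall a, right_closed br mul (sim_class br P a)))) /\
  (forall (T : Type) (br : T -> T -> T -> T) (mul : T -> T -> T) (P : T -> Prop),
      is_skew_truss br mul -> normal_sub_heap br P ->
      (paragon br mul P <-> closed br mul P)).
Proof.
  assert (Part1 : forall (T : Type) (br : T -> T -> T -> T) (mul : T -> T -> T) (P : T -> Prop),
      is_near_truss br mul -> normal_sub_heap br P ->
      (paragon br mul P <->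
       (left_closed br mul P /\ forall a, right_closed br mul (sim_class br P a)))).
  { intros T br mul P [[[hA [hM1 hM2]] _] hD] hP.
    destruct hP as [[[p Hp] HPc] HN] eqn:EP.
    split.
    - intros [_ Hcl]. split.
      + intros s s' t Hs Hs'.
        destruct (Hcl p) as [_ [Hl _]].
        apply (P_class hA hM1 hM2 hP p Hp).
        apply Hl; apply (P_class hA hM1 hM2 hP p Hp); auto.
      + intros a. apply (Hcl a).
    - intros [Hl Hr]. split; [exact hP|]. intros a.
      split; [apply class_subheap; auto|]. split; [|apply Hr].
      intros s s' t Hs Hs'. unfold sim_class in *.
      apply (cls_gen hA hM1 hM2 hP (fun x => mul t x)); auto.
      intros u u' [q [Hq Hq2]]. exists q; split; auto.
      pose proof (Hl q (br u' u q) t Hq Hq2) as K.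
      rewrite hD, <- hA, hM1 in K. exact K. }
  split; [exact Part1|].
  intros T br mul P Hs hP.
  destruct Hs as [Hn hD2].
  rewrite (Part1 T br mul P Hn hP).
  destruct Hn as [[[hA [hM1 hM2]] _] hD].
  destruct hP as [[[p Hp] HPc] HN] eqn:EP.
  split.
  - intros [Hl Hr]. split; auto.
    intros s s' t Hs Hs'.
    apply (P_class hA hM1 hM2 hP p Hp).
    apply Hr; apply (P_class hA hM1 hM2 hP p Hp); auto.
  - intros [Hl Hr]. split; auto. intros a.
    intros s s' t Hs Hs'. unfold sim_class in *.
    apply (cls_gen hA hM1 hM2 hP (fun x => mul x t)); auto.
    intros u u' [q [Hq Hq2]]. exists q; split; auto.
    pose proof (Hr q (br u' u q) t Hq Hq2) as K.
    rewrite hD2, <- hA, hM1 in K. exact K.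
Qed.
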